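(* There is an absolute constant $c>0$ such that for all sufficiently large $k$, with $r=2^k\ln 2-\frac{1+\ln 2}{2}-\epsilon_k$, $\epsilon_k=\Theta_k(2^{-k/3})$ and $M=\lceil rN\rceil$, with probability $1-o(1)$ as $N\to\infty$ the following holds: for every set $A\subseteq L$ of literals with $|A|\ge 0.018N$, the set $\mathcal M$ of indices $i\in[M]$ such that at least $0.002k$ of the literals $\Phi_{i1},\dots,\Phi_{ik}$ lie in $A$ satisfies $|\mathcal M|\ge (1-\exp(-ck))M$.
   Context: $\Phi=\Phi_k(N,M)$ is the random $k$-CNF on $V=\{x_1,\dots,x_N\}$ with literal set $L=\{x_1,\neg x_1,\dots,x_N,\neg x_N\}$ and clauses $\Phi_i=\Phi_{i1}\vee\dots\vee\Phi_{ik}$ ($i\in[M]$), each $\Phi_{ij}$ independent and uniform in $L$. Literals in a clause are counted by position. *)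

(* Defs.v *)
From mathcomp Require Import all_boot.
From Stdlib Require Import Reals.
Set Implicit Arguments.
Unset Strict Implicit.
Unset Printing Implicit Defensive.

Definition Rleb (x y : R) : bool := if Rle_dec x y then true else false.

(* ceiling of a real, as a natural number (0 for negative values) *)
Definition ceil_nat (x : R) : nat := Z.to_nat (1 - up (- x))%Z.

(* Literals: L = {x_1, ~x_1, ..., x_N, ~x_N} is encoded by 'I_(2*N)
   (any fixed bijection; the statement is invariant under it).
   A k-CNF with M clauses is a function Phi : 'I_M -> 'I_k -> L,
   Phi i j being the j-th literal of clause i (literals counted by position). *)
Definition kcnf (N k M : nat) := {ffun 'I_M -> {ffun 'I_k -> 'I_(2 * N)}}.

Definition hits (N k M : nat) (Phi : kcnf N k M) (A : {set 'I_(2 * N)}) (i : 'I_M) : nat :=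
  #|[set j : 'I_k | Phi i j \in A]|.

Definition heavy (N k M : nat) (Phi : kcnf N k M) (A : {set 'I_(2 * N)}) : {set 'I_M} :=
  [set i : 'I_M | Rleb (0.002 * INR k) (INR (hits Phi A i))].

Definition good_event (c : R) (N k M : nat) (Phi : kcnf N k M) : bool :=
  [forall A : {set 'I_(2 * N)},
     Rleb (0.018 * INR N) (INR #|A|) ==>
     Rleb ((1 - exp (- (c * INR k))) * INR M) (INR #|heavy Phi A|)].

(* probability under the uniform distribution: each Phi_ij independent and
   uniform in L, i.e. Phi uniform over kcnf N k M *)
Definition prob_good (c : R) (N k M : nat) : R :=
  INR #|[set Phi : kcnf N k M | good_event c Phi]| / INR #|[set: kcnf N k M]|.

Definition density (eps : nat -> R) (k : nat) : R :=
  (2 ^ k * ln 2 - (1 + ln 2) / 2 - eps k)%R.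

Definition is_Theta_2_neg_k_third (eps : nat -> R) : Prop :=
  exists C1 C2 : R, exists k1 : nat, (0 < C1)%R /\ (0 < C2)%R /\
    forall k : nat, (k1 <= k)%coq_nat ->
      (C1 * Rpower 2 (- (INR k) / 3) <= eps k <= C2 * Rpower 2 (- (INR k) / 3))%R.

(* Main.v *)
Require Import Defs.
From mathcomp Require Import all_boot.
From Stdlib Require Import Reals.
From Stdlib Require Import Lra Lia ZArith.
From mathcomp Require Import ssrnat.
Set Implicit Arguments. Unset Strict Implicit.

Lemma pow_card_prod (I : finType) (Q : pred I) (w : nat) :
  w ^ #|[set i | Q i]| = \prod_i (if Q i then w else 1).
Proof.
rewrite -big_mkcond /= -prod_nat_const; apply: eq_bigl => i /=; exact: in_set.
Qed.

Lemma sum_pow_card (I J : finType) (P : pred J) (w : nat) :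
  \sum_(F : {ffun I -> J}) w ^ #|[set i | P (F i)]| =
  (\sum_(j : J) (if P j then w else 1)) ^ #|I|.
Proof.
rewrite (eq_bigr (fun F : {ffun I -> J} => \prod_i (if P (F i) then w else 1))); last first.
  by move=> F _; rewrite pow_card_prod.
rewrite -(bigA_distr_bigA (fun (i:I) (j:J) => if P j then w else 1)).
by rewrite prod_nat_const cardT -cardE.
Qed.

Lemma INR_muln m n : INR (m * n) = (INR m * INR n)%R.
Proof. by rewrite -multE mult_INR. Qed.
Lemma INR_addn m n : INR (m + n) = (INR m + INR n)%R.
Proof. by rewrite -plusE plus_INR. Qed.
Lemma INR_expn m n : INR (m ^ n) = (INR m ^ n)%R.
Proof. elim: n => [|n IH] //=; by rewrite expnS INR_muln IH. Qed.
Lemma INR_subn m n : n <= m -> INR (m - n) = (INR m - INR n)%R.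
Proof. move=> H; rewrite -minusE minus_INR //; exact/leP. Qed.

Lemma card_split (T : finType) (p : pred T) :
  #|[set i | p i]| + #|[set i | ~~ p i]| = #|T|.
Proof.
rewrite -(cardsC [set i | p i]); congr (_ + _); apply: eq_card => i.
by rewrite !inE.
Qed.

Section Count.
Variables (N k M : nat).
Local Notation clause := {ffun 'I_k -> 'I_(2 * N)}.

Definition lightc (A : {set 'I_(2 * N)}) (f : clause) : bool :=
  ~~ Rleb (0.002 * INR k) (INR #|[set j | f j \in A]|).

Definition ell (A : {set 'I_(2 * N)}) := #|[set f : clause | lightc A f]|.

Definition Lcount (Phi : kcnf N k M) A := #|[set i | lightc A (Phi i)]|.

Lemma heavy_L Phi A : #|heavy Phi A| + Lcount Phi A = M.
Proof. by rewrite /heavy /Lcount /lightc /hits (card_split (fun i => Rleb _ _)) card_ord. Qed.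

Lemma sum_if_const (T : finType) (p : pred T) a b :
  \sum_(x : T) (if p x then a else b) = a * #|[set x | p x]| + b * #|[set x | ~~ p x]|.
Proof.
rewrite (bigID p) /=; congr (_ + _).
  rewrite (eq_bigr (fun _ => a)); last by move=> x ->.
  rewrite sum_nat_const mulnC; congr (_ * _); apply: eq_card => x; by rewrite inE.
rewrite (eq_bigr (fun _ => b)); last by move=> x /negbTE ->.
rewrite sum_nat_const mulnC; congr (_ * _); apply: eq_card => x; by rewrite inE.
Qed.

Lemma light_small A (f : clause) : lightc A f -> #|[set j | f j \in A]| <= k %/ 500.
Proof.
rewrite /lightc /Rleb; case: Rle_dec => // H _.
rewrite leq_divRL //.
apply/leP; apply: INR_le.
rewrite INR_muln; simpl (INR 500).
lra.
Qed.

Lemma clause_bound A : ell A * 5 ^ (k - k %/ 500) <= (#|A| + 5 * #|~: A|) ^ k.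
Proof.
have -> : #|A| + 5 * #|~: A| = \sum_(x : 'I_(2 * N)) (if x \notin A then 5 else 1).
  rewrite sum_if_const addnC mul1n; congr (_ * _ + _); apply: eq_card => x; rewrite !inE //.
  by rewrite negbK.
rewrite -{3}(card_ord k) -sum_pow_card.
rewrite /ell -sum_nat_const.
apply: (@leq_trans (\sum_(f in [set f : clause | lightc A f]) 5 ^ #|[set i | f i \notin A]|)).
  apply: leq_sum => f; rewrite inE => Hf.
  rewrite leq_pexp2l //.
  have Hs := card_split (fun i => f i \in A); rewrite card_ord in Hs.
  have Hh := light_small Hf.
  apply: (@leq_trans (k - #|[set i | f i \in A]|)); first exact: leq_sub2l.
  by rewrite -{1}Hs addKn.
apply: (@leq_trans (\sum_(f : clause) 5 ^ #|[set i | f i \notin A]|)) => //.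
rewrite [X in _ <= X](bigID (fun f => f \in [set f : clause | lightc A f])) /=.
exact: leq_addr.
Qed.

Lemma formula_sum A : \sum_(Phi : kcnf N k M) 27 ^ Lcount Phi A
   = (#|{ffun 'I_k -> 'I_(2 * N)}| + 26 * ell A) ^ M.
Proof.
rewrite /Lcount.
rewrite (sum_pow_card 'I_M (lightc A) 27) card_ord; congr (_ ^ _).
rewrite sum_if_const mul1n -(card_split (lightc A)) /ell.
have -> : #|[set x : clause | lightc A x]| = #|[set f : clause | lightc A f]| by [].
rewrite -addnA addnC; by rewrite addnCA -mulSn.
Qed.

Lemma bad_bound (c : R) (t0 : nat) :
  (forall (Phi : kcnf N k M) (A : {set 'I_(2 * N)}), Rleb (0.018 * INR N) (INR #|A|) ->
     ~~ Rleb ((1 - exp (- (c * INR k))) * INR M) (INR #|heavy Phi A|) ->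
     t0 <= Lcount Phi A) ->
  #|[set Phi : kcnf N k M | ~~ good_event c Phi]| * 27 ^ t0 <=
  \sum_(A : {set 'I_(2 * N)} | Rleb (0.018 * INR N) (INR #|A|))
     (#|{ffun 'I_k -> 'I_(2 * N)}| + 26 * ell A) ^ M.
Proof.
move=> Ht.
rewrite (eq_bigr (fun A => \sum_(Phi : kcnf N k M) 27 ^ Lcount Phi A)); last first.
  by move=> A _; rewrite formula_sum.
rewrite exchange_big /= -sum_nat_const.
apply: (@leq_trans (\sum_(Phi in [set Phi : kcnf N k M | ~~ good_event c Phi])
    \sum_(A : {set 'I_(2 * N)} | Rleb (0.018 * INR N) (INR #|A|)) 27 ^ Lcount Phi A)).
  apply: leq_sum => Phi; rewrite inE /good_event negb_forall => /existsP [A].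
  rewrite negb_imply => /andP [HA HB].
  rewrite (bigD1 A) //=.
  apply: leq_trans (leq_addr _ _).
  by rewrite leq_pexp2l //; apply: Ht.
rewrite [X in _ <= X](bigID (fun Phi => Phi \in [set Phi : kcnf N k M | ~~ good_event c Phi])) /=.
exact: leq_addr.
Qed.

End Count.

Open Scope R_scope.

Lemma exp_pow_n x n : exp x ^ n = exp (INR n * x).
Proof.
elim: n => [|n IH]; first by rewrite /= Rmult_0_l exp_0.
rewrite S_INR /= IH -exp_plus; f_equal; ring.
Qed.

Lemma five_le_exp2 : 5 <= exp 2.
Proof.
have -> : 2 = /2 + /2 + /2 + /2 by field.
rewrite !exp_plus.
have H : 1 + /2 <= exp (/2) := exp_ineq1_le (/2).
move: H; set y := exp (/2) => H.
have H1 : 9/4 <= y * y by nra.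
have H2 : 27/8 <= y * y * y by nra.
nra.
Qed.

Lemma exp3_le_27 : exp 3 <= 27.
Proof.
have -> : 3 = 1 + 1 + 1 by ring.
rewrite !exp_plus.
have H := exp_le_3. have H0 : 0 <= exp 1 by left; apply: exp_pos.
move: H H0; set y := exp 1 => H H0.
have H1 : y * y <= 9 by nra.
nra.
Qed.

Lemma pow_le_mono a b n : 0 <= a -> a <= b -> a ^ n <= b ^ n.
Proof. move=> Ha Hb; apply: pow_incr; lra. Qed.

Lemma ceil_ge x : x <= INR (ceil_nat x).
Proof.
rewrite /ceil_nat.
have [H1 H2] := archimed (- x).
case: (Z_lt_le_dec (1 - up (- x)) 0) => Hz.
  have -> : Z.to_nat (1 - up (- x)) = 0%nat by lia.
  have : IZR (1 - up (-x)) < 0 by apply: IZR_lt.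
  rewrite minus_IZR /=; lra.
rewrite INR_IZR_INZ Z2Nat.id //.
rewrite minus_IZR /=; lra.
Qed.

Lemma ceil_le x (n : nat) : x < INR n -> (ceil_nat x <= n)%N.
Proof.
move=> Hx; rewrite /ceil_nat.
have [H1 H2] := archimed (- x).
have : (- Z.of_nat n < up (- x))%Z.
  apply: lt_IZR; rewrite opp_IZR -INR_IZR_INZ; lra.
move=> Hz. apply/leP. lia.
Qed.

Lemma exp_mono x y : x <= y -> exp x <= exp y.
Proof. case=> H; [left; exact: exp_increasing | by rewrite H; right]. Qed.

Lemma ell_bound N k (A : {set 'I_(2 * N)}) :
  0.018 * INR N <= INR #|A| ->
  INR (ell k A) <= INR ((2 * N) ^ k) * exp (- (0.0032 * INR k)).
Proof.
move=> HA.
have Hc := clause_bound k A.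
set K := (k %/ 500)%N in Hc.
have HK : (K <= k)%N by apply: leq_div.
have HK5 : INR K * 500 <= INR k.
  have H := le_INR _ _ (elimT leP (leq_trunc_div k 500)).
  rewrite INR_muln in H; simpl (INR 500) in H; rewrite /K; lra.
have Hab := cardsC A. rewrite card_ord in Hab.
move: Hab Hc HA; set a := #|A|; set b := #|~: A| => Hab Hc HA.
have Hab' : INR a + INR b = 2 * INR N.
  by rewrite -INR_addn Hab INR_muln.
have Hc' := le_INR _ _ (elimT leP Hc).
have h5 : INR 5 = 5 by simpl; lra.
rewrite INR_muln !INR_expn INR_addn INR_muln h5 in Hc'.
set r := 0.9928.
set u := INR (2 * N).
have Hu : u = 2 * INR N by rewrite /u INR_muln.
have Hz : INR a + 5 * INR b <= u * 5 * r.
  rewrite Hu /r; have := pos_INR a; have := pos_INR b; lra.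
have Hpos : 0 <= INR a + 5 * INR b by have := pos_INR a; have := pos_INR b; lra.
have H1 := pow_le_mono k Hpos Hz.
rewrite Rpow_mult_distr (Rpow_mult_distr u 5) in H1.
have Hsplit : (5 ^ k = 5 ^ (k - K) * 5 ^ K)%R.
  by rewrite -pow_add plusE subnK.
rewrite Hsplit in H1.
have H5pos : 0 < 5 ^ (k - K) by apply: pow_lt; lra.
have H2 : INR (ell k A) <= u ^ k * 5 ^ K * r ^ k.
  apply: (Rmult_le_reg_r (5 ^ (k - K))) => //.
  apply: (Rle_trans _ _ _ Hc'); apply: (Rle_trans _ _ _ H1); right; ring.
have H3 : 5 ^ K <= exp (INR K * 2).
  rewrite -exp_pow_n; apply: pow_le_mono; [lra | exact: five_le_exp2].
have H4 : r ^ k <= exp (INR k * -0.0072).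
  rewrite -exp_pow_n; apply: pow_le_mono; first by rewrite /r; lra.
  have := exp_ineq1_le (-0.0072); rewrite /r; lra.
have H5 : 5 ^ K * r ^ k <= exp (- (0.0032 * INR k)).
  apply: (Rle_trans _ (exp (INR K * 2) * exp (INR k * -0.0072))).
    apply: Rmult_le_compat => //; [left; apply: pow_lt; lra | apply: pow_le; rewrite /r; lra].
  rewrite -exp_plus; apply: exp_mono; lra.
rewrite INR_expn -/u.
apply: (Rle_trans _ _ _ H2).
have Hu0 : 0 <= u ^ k by apply: pow_le; apply: pos_INR.
rewrite Rmult_assoc; apply: Rmult_le_compat_l => //.
Qed.

Lemma sum_le_max (I : finType) (P : pred I) (F : I -> nat) :
  (\sum_(i | P i) F i = 0)%N \/ exists2 i0, P i0 & (\sum_(i | P i) F i <= #|I| * F i0)%N.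
Proof.
case: (pickP P) => [i0 Pi0 | none].
  right; case: (arg_maxnP F Pi0) => i1 Pi1 Hmax.
  exists i1 => //.
  apply: (@leq_trans (\sum_(i | P i) F i1)%N); first by apply: leq_sum => i; apply: Hmax.
  rewrite sum_nat_const leq_mul2r max_card orbT //.
left; rewrite big_pred0 //.
Qed.

Lemma card_sets N : #|{set 'I_(2 * N)}| = (2 ^ (2 * N))%N.
Proof. by rewrite -cardsT -powersetT card_powerset cardsT card_ord. Qed.

Lemma pow4 N : INR (2 ^ (2 * N)) = exp (INR N * (2 * ln 2)).
Proof.
rewrite INR_expn -exp_pow_n -multE pow_mult.
congr (_ ^ _).
have -> : 2 * ln 2 = ln 2 + ln 2 by ring.
rewrite exp_plus exp_ln /=; lra.
Qed.

Lemma main_N k N r : (1 <= N)%N -> 0 < r ->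
  26 * exp (- (0.0032 * INR k)) <= exp (- (0.001 * INR k)) ->
  ln 2 + / 2 <= exp (- (0.001 * INR k)) * r ->
  Rabs (prob_good 0.001 N k (ceil_nat (r * INR N)) - 1) <= exp (- INR N).
Proof.
move=> HN Hr Hq Hdr.
set M := ceil_nat (r * INR N).
set d := exp (- (0.001 * INR k)).
have Hd0 : 0 < d by apply: exp_pos.
have HM : r * INR N <= INR M by apply: ceil_ge.
set t0 := ceil_nat (d * INR M).
have Ht0 : d * INR M <= INR t0 by apply: ceil_ge.
have Hbb := @bad_bound N k M 0.001 t0.
have Hyp : forall (Phi : kcnf N k M) (A : {set 'I_(2 * N)}), Rleb (0.018 * INR N) (INR #|A|) ->
     ~~ Rleb ((1 - exp (- (0.001 * INR k))) * INR M) (INR #|heavy Phi A|) ->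
     (t0 <= Lcount Phi A)%N.
  move=> Phi A _; rewrite /Rleb; case: Rle_dec => // Hn _.
  apply: ceil_le.
  have := heavy_L Phi A => /(f_equal INR); rewrite INR_addn => HL.
  rewrite -/d in Hn; lra.
have {Hbb Hyp}Hbb := Hbb Hyp.
rewrite -/d in Hq Hdr.
set nbad := #|[set Phi | ~~ good_event 0.001 Phi]| in Hbb.
set Dn := #|{ffun 'I_k -> 'I_(2 * N)}| in Hbb.
have HDn : Dn = ((2 * N) ^ k)%N by rewrite /Dn card_ffun !card_ord.
have HT : #|kcnf N k M| = (Dn ^ M)%N by rewrite card_ffun card_ord.
set Dr := INR Dn.
have HDr0 : 0 < Dr.
  rewrite /Dr HDn INR_expn; apply: pow_lt; rewrite INR_muln.
  have : (0 < INR N) by apply: lt_0_INR; apply/ltP.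
  simpl; lra.
set T := INR #|kcnf N k M|.
have HT' : T = Dr ^ M by rewrite /T HT INR_expn.
have HT0 : 0 < T by rewrite HT'; apply: pow_lt.
have key : INR nbad <= T * exp (- INR N).
  case: (sum_le_max (fun A : {set 'I_(2 * N)} => Rleb (0.018 * INR N) (INR #|A|))
            (fun A => (Dn + 26 * ell k A) ^ M)%N) => [H0 | [A HA Hs]].
    rewrite H0 leqn0 muln_eq0 expn_eq0 /= orbF in Hbb.
    rewrite (eqP Hbb) /=; left; apply: Rmult_lt_0_compat => //; apply: exp_pos.
  have H1 := leq_trans Hbb Hs.
  rewrite card_sets in H1.
  have H2 := le_INR _ _ (elimT leP H1).
  rewrite !INR_muln pow4 !INR_expn INR_addn INR_muln -/Dr in H2.
  have HA' : 0.018 * INR N <= INR #|A| by move: HA; rewrite /Rleb; case: Rle_dec.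
  have Hl := ell_bound k HA'. rewrite -HDn -/Dr in Hl.
  have h26 : INR 26 = 26 by simpl; lra.
  have h27 : INR 27 = 27 by simpl; lra.
  rewrite h26 h27 in H2.
  have Hb1 : Dr + 26 * INR (ell k A) <= Dr * (1 + d).
    have : Dr * (26 * exp (- (0.0032 * INR k))) <= Dr * d.
      apply: Rmult_le_compat_l => //; lra.
    lra.
  have Hb2 : (Dr + 26 * INR (ell k A)) ^ M <= T * exp (INR M * d).
    apply: (Rle_trans _ ((Dr * (1 + d)) ^ M)).
      apply: pow_le_mono => //; have := pos_INR (ell k A); lra.
    rewrite Rpow_mult_distr HT'; apply: Rmult_le_compat_l; first by left; apply: pow_lt.
    rewrite -exp_pow_n; apply: pow_le_mono; first lra.
    have := exp_ineq1_le d; lra.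
  have Hb3 : exp (d * INR M * 3) <= 27 ^ t0.
    apply: (Rle_trans _ (exp (INR t0 * 3))); first by apply: exp_mono; lra.
    rewrite -exp_pow_n; apply: pow_le_mono; first by left; apply: exp_pos.
    exact: exp3_le_27.
  have Hb4 : exp (INR N * (2 * ln 2)) * exp (INR M * d) <= exp (- INR N) * exp (d * INR M * 3).
    rewrite -!exp_plus; apply: exp_mono.
    have : d * (r * INR N) <= d * INR M by apply: Rmult_le_compat_l; lra.
    have : 0 <= INR N by apply: pos_INR.
    nra.
  have Hn0 : 0 <= INR nbad by apply: pos_INR.
  have He3 : 0 < exp (d * INR M * 3) by apply: exp_pos.
  apply: (Rmult_le_reg_r (exp (d * INR M * 3))) => //.
  apply: (Rle_trans _ (INR nbad * 27 ^ t0)); first by apply: Rmult_le_compat_l.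
  apply: (Rle_trans _ _ _ H2).
  have He2 : 0 <= exp (INR N * (2 * ln 2)) by left; apply: exp_pos.
  apply: (Rle_trans _ (exp (INR N * (2 * ln 2)) * (T * exp (INR M * d)))).
    by apply: Rmult_le_compat_l.
  have HT1 : 0 <= T by lra.
  have := Rmult_le_compat_l T _ _ HT1 Hb4.
  move=> H.
  have E1 : exp (INR N * (2 * ln 2)) * (T * exp (INR M * d)) = T * (exp (INR N * (2 * ln 2)) * exp (INR M * d)) by ring.
  have E2 : T * exp (- INR N) * exp (d * INR M * 3) = T * (exp (- INR N) * exp (d * INR M * 3)) by ring.
  by rewrite E1 E2.
rewrite /prob_good cardsT -/T.
have Hsp := card_split (fun Phi : kcnf N k M => good_event 0.001 Phi).
have := f_equal INR Hsp; rewrite INR_addn -/nbad -/T => Hg.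
set ng := INR _ in Hg *.
have -> : ng / T - 1 = - (INR nbad / T).
  rewrite -Hg; field; lra.
rewrite Rabs_Ropp Rabs_right; last first.
  apply: Rle_ge; apply: Rmult_le_pos; [apply: pos_INR | left; apply: Rinv_0_lt_compat; done].
apply: (Rmult_le_reg_r T) => //.
rewrite /Rdiv Rmult_assoc Rinv_l; lra.
Qed.


Lemma INR_toZ z : IZR z <= INR (Z.to_nat z).
Proof.
case: (Z_lt_le_dec z 0) => Hz.
  have -> : Z.to_nat z = 0%nat by lia.
  have : IZR z < 0 by apply: IZR_lt. simpl; lra.
rewrite INR_IZR_INZ Z2Nat.id //; lra.
Qed.

Lemma ln2_bounds : / 2 < ln 2 < 1.
Proof.
split; first exact: ln_lt_2.
rewrite -[X in _ < X](ln_exp 1).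
apply: ln_increasing; first lra.
have := exp_ineq1 1; lra.
Qed.

Lemma k_conds (eps : nat -> R) C2 k :
  0 < eps k -> eps k <= C2 -> 12000 + 5 * C2 <= INR k ->
  let d := exp (- (0.001 * INR k)) in
  26 * exp (- (0.0032 * INR k)) <= d /\ ln 2 + / 2 <= d * density eps k.
Proof.
move=> He1 He2 Hk d.
have [L1 L2] := ln2_bounds.
have Hk0 : 0 <= INR k by apply: pos_INR.
split.
  have -> : d = exp (0.0022 * INR k) * exp (- (0.0032 * INR k)).
    by rewrite /d -exp_plus; f_equal; lra.
  apply: Rmult_le_compat_r; first by left; apply: exp_pos.
  have := exp_ineq1_le (0.0022 * INR k); lra.
have Hd1 : d <= 1 by rewrite /d -exp_0; apply: exp_mono; lra.
have Hd0 : 0 < d by apply: exp_pos.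
have H2k : d * 2 ^ k = exp (INR k * (ln 2 - 0.001)).
  rewrite -{1}(exp_ln 2) ?exp_pow_n /d -?exp_plus; [f_equal; ring | lra].
have H3 := exp_ineq1_le (INR k * (ln 2 - 0.001)).
rewrite /density.
have -> : d * (2 ^ k * ln 2 - (1 + ln 2) / 2 - eps k) =
   (d * 2 ^ k) * ln 2 - d * ((1 + ln 2) / 2 + eps k) by ring.
rewrite H2k.
have H4 : d * ((1 + ln 2) / 2 + eps k) <= (1 + ln 2) / 2 + eps k.
  have : 0 <= (1 + ln 2) / 2 + eps k by lra.
  nra.
have Hh : 0 <= INR k * ((ln 2 - /2) * (ln 2 + 0.499)).
  by apply: Rmult_le_pos => //; apply: Rmult_le_pos; lra.
have H5 : INR k * 0.499 * 0.5 <= (1 + INR k * (ln 2 - 0.001)) * ln 2 by nra.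
have H6 : (1 + INR k * (ln 2 - 0.001)) * ln 2 <= exp (INR k * (ln 2 - 0.001)) * ln 2.
  apply: Rmult_le_compat_r; lra.
have HC2 : 0 <= C2 by lra.
lra.
Qed.

Theorem mainTheorem10 :
  exists c : R, (0 < c)%R /\
    forall eps : nat -> R, is_Theta_2_neg_k_third eps ->
      exists k0 : nat, forall k : nat, (k0 <= k)%coq_nat ->
        Un_cv (fun N : nat =>
                 prob_good c N k (ceil_nat (density eps k * INR N)))
              1%R.
Proof.
exists 0.001; split; first lra.
move=> eps [C1 [C2 [k1 [HC1 [HC2 Hk]]]]].
exists (k1 + Z.to_nat (up (5 * C2 + 12000)))%coq_nat => k Hk0.
have [He1 He2] := Hk k ltac:(lia).
have Hrp : 0 < Rpower 2 (- INR k / 3) by rewrite /Rpower; apply: exp_pos.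
have Hrp1 : Rpower 2 (- INR k / 3) <= 1.
  rewrite /Rpower -exp_0; apply: exp_mono.
  have [L1 _] := ln2_bounds. have := pos_INR k. nra.
have Hkk : 12000 + 5 * C2 <= INR k.
  have := le_INR _ _ Hk0. rewrite !plus_INR.
  have := INR_toZ (up (5 * C2 + 12000)). have := pos_INR k1.
  have [A1 _] := archimed (5 * C2 + 12000).
  lra.
have Hek : 0 < eps k by nra.
have Hek2 : eps k <= C2 by nra.
have [Hq Hdr] := k_conds Hek Hek2 Hkk.
set d := exp (- (0.001 * INR k)) in Hq Hdr.
have Hd0 : 0 < d by apply: exp_pos.
have Hr : 0 < density eps k.
  have [L1 _] := ln2_bounds. nra.
move=> e He.
have [A1 _] := archimed (/ e).
exists (S (Z.to_nat (up (/ e)))) => n Hn.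
rewrite /R_dist.
have HN : (1 <= n)%N by apply/leP; lia.
apply: (Rle_lt_trans _ _ _ (main_N HN Hr Hq Hdr)).
have Hn' : / e < INR n.
  have := le_INR _ _ Hn. rewrite S_INR. have := INR_toZ (up (/ e)). lra.
have Hx := exp_ineq1_le (INR n).
have Hn0 : 0 < INR n by have := Rinv_0_lt_compat e He; lra.
rewrite exp_Ropp.
apply: (Rmult_lt_reg_l (exp (INR n))); first by apply: exp_pos.
rewrite Rinv_r; last by apply: Rgt_not_eq; apply: exp_pos.
have : 1 < e * INR n.
  have := Rmult_lt_compat_l e _ _ He Hn'. rewrite Rinv_r; lra.
nra.
Qed.
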